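(* Assume $n\ge 3t+1$. In any execution of COOL, $\eta^{[2]}\le 2$.
   Context: Setting. $n$ processors indexed by $[1:n]$, pairwise joined by reliable private synchronous channels; recipients know senders. At most $t$ processors are dishonest, controlled by an adversary who may make them deviate arbitrarily (missing values replaced by a fixed default); the others are honest. Processor $i$ holds an $\ell$-bit initial message $\boldsymbol w_i$. $\phi$ is a default value different from every $\ell$-bit message. Logarithms are base 2. Code. $k=\lfloor t/5\rfloor+1$, $c=\lceil \max\{\ell,(t/5+1)\log(n+1)\}/k\rceil$. Messages are zero-padded to $kc$ bits and viewed in $GF(2^c)^k$. Integers in $[1:n]$ are identified with distinct nonzero elements of $GF(2^c)$; $\boldsymbol h_i\in GF(2^c)^k$ has entries $h_{i,j}=\prod_{p\in[1:k],\,p\ne j}\frac{i-p}{j-p}$ (field arithmetic). COOL, Phases 1–2 (honest processor $i$). Initialization: updated message $\boldsymbol w^{(i)}:=\boldsymbol w_i$, $y^{(i)}_j:=\boldsymbol h_j^{\mathsf T}\boldsymbol w_i$, $u_i(i):=1$. Phase 1. (a) Send $(y^{(i)}_j,y^{(i)}_i)$ to each $j\ne i$. (b) For $j\ne i$, link indicator $u_i(j):=1$ if the pair received from $j$ equals $(y^{(i)}_i,y^{(i)}_j)$, else $0$. Success indicator $s_i:=1$ if $\sum_{j=1}^n u_i(j)\ge n-t$; otherwise $s_i:=0$ and $\boldsymbol w^{(i)}:=\phi$. (c) Send $s_i$ to all; each processor records the indicator received from each $j$ (own for itself) and forms $\mathcal S_1=\{j:s_j=1\}$, $\mathcal S_0=\{j:s_j=0\}$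 (views may differ between processors). Phase 2. If $s_i=1$: set $u_i(j):=0$ for all $j\in\mathcal S_0$; if now $\sum_j u_i(j)<n-t$, set $s_i:=0$, $\boldsymbol w^{(i)}:=\phi$ and send $s_i=0$ to all. Everyone overwrites recorded indicators with newly received ones and recomputes $\mathcal S_0,\mathcal S_1$. Notation. For $p\in\{1,2\}$, $s^{[p]}_i$ is the value of honest processor $i$'s success indicator at the end of Phase $p$, and $\eta^{[p]}$ is the number of distinct values in $\{\boldsymbol w_i: i\text{ honest},\ s^{[p]}_i=1\}$ (initial messages). *)

(* Defs.v *)
(* Model of Phases 1-2 of COOL (honest processors' view). *)
From HB Require Import structures.
From mathcomp Require Import all_boot all_order all_algebra all_field.
From mathcomp Require Import zify.
Set Implicit Arguments. Unset Strict Implicit. Unset Printing Implicit Defensive.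
Import GRing.Theory.

Definition kpar (t : nat) : nat := (t %/ 5).+1.

(* c = ceil( max{l, (t/5+1) log2(n+1)} / k ), i.e. the least m such that
   m*k >= l and m*k >= (t/5+1) log2(n+1); the latter is equivalent to
   (n+1)^(t+5) <= 2^(5*m*k). *)
Definition cpred (n t l : nat) (m : nat) : bool :=
  (l <= m * kpar t) && ((n.+1) ^ (t + 5) <= 2 ^ (5 * (m * kpar t))).

Lemma cpred_ex n t l : exists m, cpred n t l m.
Proof.
exists (l + (t + 5) * n.+1); rewrite /cpred /kpar.
move: (t %/ 5) => q; apply/andP; split.
  by nia.
apply: (@leq_trans ((2 ^ n.+1) ^ (t + 5))).
  by rewrite leq_exp2r ?addn_gt0 ?orbT // ltnW // ltn_expl.
rewrite -expnM leq_pexp2l //; nia.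
Qed.

Definition cpar (n t l : nat) : nat := ex_minn (cpred_ex n t l).

Local Open Scope ring_scope.

Section COOL.
Variables (n t l : nat) (F : finFieldType).
(* toF : fixed bijection between c-bit strings and GF(2^c) *)
Variable toF : (cpar n t l).-tuple bool -> F.
(* emb : identification of the integers 1..n with distinct nonzero field elements *)
Variable emb : nat -> F.
Variable honest : {set 'I_n}.
(* initial l-bit messages (processor i : 'I_n is processor number i+1) *)
Variable w : 'I_n -> l.-tuple bool.
(* adv1 i j : pair received by honest i from dishonest j in Phase 1(a) *)
Variable adv1 : 'I_n -> 'I_n -> F * F.
(* adv2 i j : success indicator received by honest i from dishonest j in Phase 1(c) *)
Variable adv2 : 'I_n -> 'I_n -> bool.

Definition encode (m : l.-tuple bool) : 'rV[F]_(kpar t) :=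
  let c := cpar n t l in
  let pad := (m : seq bool) ++ nseq (kpar t * c - l) false in
  \row_(j < kpar t) toF [tuple nth false pad (j * c + b) | b < c].

(* h_{x,j} for x an integer label, j : 'I_k standing for integer j+1 *)
Definition hcoef (x : nat) (j : 'I_(kpar t)) : F :=
  \prod_(p < kpar t | p != j) ((emb x - emb p.+1) / (emb j.+1 - emb p.+1)).

Definition lab (i : 'I_n) : nat := i.+1.

Definition yval (i : 'I_n) (x : nat) : F :=
  \sum_(m < kpar t) hcoef x m * encode (w i) 0 m.

Definition recv1 (i j : 'I_n) : F * F :=
  if j \in honest then (yval j (lab i), yval j (lab j)) else adv1 i j.

Definition u1 (i j : 'I_n) : bool :=
  if j == i then true else recv1 i j == (yval i (lab i), yval i (lab j)).

Definition s1 (i : 'I_n) : bool := (n - t <= #|[set j | u1 i j]|)%N.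

Definition rec1 (i j : 'I_n) : bool :=
  if j == i then s1 i else if j \in honest then s1 j else adv2 i j.

(* s_i^[2]: u_i(j) zeroed for j in S_0 (i's view), then threshold re-checked *)
Definition s2 (i : 'I_n) : bool :=
  s1 i && (n - t <= #|[set j | u1 i j && rec1 i j]|)%N.

Definition eta2 : nat := #|[set w i | i in [set i in honest | s2 i]]|.

End COOL.

(* Main.v *)
Require Import Defs.
From HB Require Import structures.
From mathcomp Require Import all_boot all_order all_algebra all_field.
Import GRing.Theory.
From mathcomp Require Import zify.
Set Implicit Arguments. Unset Strict Implicit. Unset Printing Implicit Defensive.

Module Aux.
Local Open Scope ring_scope.


Definition Lag (t : nat) (F : finFieldType) (emb : nat -> F) (j : 'I_(kpar t)) : {poly F} :=
  \prod_(p < kpar t | p != j) (('X - (emb p.+1)%:P) * ((emb j.+1 - emb p.+1)^-1)%:P).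

Lemma Lag_eval t F emb x j : (@Lag t F emb j).[emb x] = hcoef emb x j.
Proof.
rewrite /Lag /hcoef horner_prod; apply: eq_bigr => p _.
by rewrite hornerM hornerXsubC hornerC.
Qed.

Lemma Lag_size t F emb j : (size (@Lag t F emb j) <= kpar t)%N.
Proof.
rewrite /Lag; apply: leq_trans (size_poly_prod_leq _ _) _.
have H : (\sum_(i < kpar t | i != j) size (('X - (emb i.+1)%:P) * ((emb j.+1 - emb i.+1)^-1)%:P)%R
   <= \sum_(i < kpar t | i != j) 2)%N.
  apply: leq_sum => i _; apply: leq_trans (size_polyMleq _ _) _.
  rewrite size_XsubC; have := size_polyC_leq1 ((emb j.+1 - emb i.+1)^-1); move=> h; apply: leq_trans (_ : (2 + 1).-1 <= 2)%N => //; rewrite leq_pred2 ?addn1 //. 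
rewrite sum_nat_const in H.
have Hc : #|[pred i : 'I_(kpar t) | i != j]| = (kpar t).-1.
  by rewrite cardC1 card_ord.
rewrite Hc in H *; have := ltn_ord j; move=> hj; apply: (@leq_trans (((kpar t).-1 * 2).+1 - (kpar t).-1)); [by rewrite leq_sub2r // ltnS | lia].
Qed.

Definition Qp n t l (F : finFieldType) (toF : (cpar n t l).-tuple bool -> F) (emb : nat -> F)
  (m : l.-tuple bool) : {poly F} :=
  \sum_(j < kpar t) encode toF m 0 j *: Lag emb j.

Definition yv n t l (F : finFieldType) (toF : (cpar n t l).-tuple bool -> F) (emb : nat -> F)
  (m : l.-tuple bool) (x : nat) : F :=
  \sum_(j < kpar t) hcoef emb x j * encode toF m 0 j.

Lemma Qp_eval n t l F toF emb m x :
  (@Qp n t l F toF emb m).[emb x] = yv toF emb m x.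
Proof.
rewrite /Qp /yv horner_sum; apply: eq_bigr => j _.
by rewrite hornerZ Lag_eval mulrC.
Qed.

Lemma Qp_size n t l F toF emb m : (size (@Qp n t l F toF emb m) <= kpar t)%N.
Proof.
rewrite /Qp; apply: leq_trans (size_sum _ _ _) _.
apply/bigmax_leqP => j _; apply: leq_trans (size_scale_leq _ _) _.
exact: Lag_size.
Qed.

Lemma hcoef_node t (F : finFieldType) (emb : nat -> F) (j m : 'I_(kpar t)) :
  {in [pred x : nat | (0 < x <= kpar t)%N] &, injective emb} ->
  hcoef emb j.+1 m = (j == m)%:R.
Proof.
move=> inj; rewrite /hcoef; have [<-|ne] := eqVneq j m.
  apply: big1 => p pj; rewrite divff // subr_eq0; apply/eqP => /inj.
  rewrite !inE /= !ltn_ord => /(_ isT isT) [] /val_inj /eqP; rewrite eq_sym.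
  by rewrite (negbTE pj).
rewrite (bigD1 j) //= subrr mul0r mul0r //.
Qed.

Lemma yv_node n t l F toF emb m (j : 'I_(kpar t)) :
  {in [pred x : nat | (0 < x <= kpar t)%N] &, injective emb} ->
  @yv n t l F toF emb m j.+1 = encode toF m 0 j.
Proof.
move=> inj; rewrite /yv (bigD1 j) //= hcoef_node // eqxx mul1r big1 ?addr0 //.
by move=> p pj; rewrite hcoef_node // eq_sym (negbTE pj) mul0r.
Qed.

Lemma cpar_spec n t l : cpred n t l (cpar n t l).
Proof. by rewrite /cpar; case: ex_minnP. Qed.

Lemma encode_inj n t l (F : finFieldType) (toF : (cpar n t l).-tuple bool -> F) :
  injective toF -> injective (encode toF).
Proof.
move=> inj m1 m2 E.
have /andP [Hl _] := cpar_spec n t l.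
apply/val_inj; apply: (@eq_from_nth _ false); first by rewrite !size_tuple.
move=> i; rewrite size_tuple => il.
have c0 : (0 < cpar n t l)%N.
  case: (cpar n t l) Hl => //; rewrite mul0n; lia.
have jk : (i %/ cpar n t l < kpar t)%N by rewrite ltn_divLR // mulnC; lia.
have := congr1 (fun M : 'rV[F]_(kpar t) => M ord0 (Ordinal jk)) E; rewrite /encode !mxE => /inj.
move=> /(congr1 (fun tu => tnth tu (Ordinal (ltn_pmod i c0)))); rewrite !tnth_mktuple /=.
by rewrite -divn_eq !nth_cat !size_tuple il.
Qed.

Lemma agree_eq n t l F toF emb (m1 m2 : l.-tuple bool) (J : {set 'I_n}) :
  injective toF -> {in [pred x : nat | (0 < x <= n)%N] &, injective emb} ->
  (kpar t <= n)%N -> (kpar t <= #|J|)%N ->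
  (forall j, j \in J -> @yv n t l F toF emb m1 j.+1 = yv toF emb m2 j.+1) -> m1 = m2.
Proof.
move=> itoF iemb kn kJ Hag.
have iemb' : {in [pred x : nat | (0 < x <= kpar t)%N] &, injective emb}.
  move=> x y; rewrite !inE => /andP[x0 xk] /andP[y0 yk]; apply: iemb; rewrite inE;
  apply/andP; split => //; exact: leq_trans kn.
have D0 : Qp toF emb m1 - Qp toF emb m2 = 0.
  apply/eqP; apply/negPn/negP => nz.
  have := max_poly_roots nz (rs := [seq emb j.+1 | j : 'I_n <- enum J]).
  rewrite size_map -cardE.
  have -> : all (root (Qp toF emb m1 - Qp toF emb m2)) [seq emb j.+1 | j : 'I_n <- enum J].
    apply/allP => x /mapP [j jJ ->]; rewrite mem_enum in jJ.
    by rewrite /root hornerD hornerN !Qp_eval Hag // subrr.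
  have -> : uniq [seq emb j.+1 | j : 'I_n <- enum J].
    rewrite map_inj_in_uniq ?enum_uniq // => a b _ _ /iemb.
    rewrite !inE !ltn_ord => /(_ isT isT) [] /val_inj //.
  move=> /(_ isT isT) H.
  have : (size (Qp toF emb m1 - Qp toF emb m2)%R <= kpar t)%N.
    by apply: leq_trans (size_polyD _ _) _; rewrite geq_max size_polyN !Qp_size.
  by move=> h; have := leq_trans (leq_trans H h) kJ; rewrite ltnn.
apply: (encode_inj itoF); apply/rowP => j.
rewrite -(yv_node toF m1 j iemb') -(yv_node toF m2 j iemb') -!Qp_eval.
by rewrite (subr0_eq D0).
Qed.

Local Close Scope ring_scope.


Lemma three_elems (T : finType) (X : {set T}) : (3 <= #|X|)%N ->
  exists x y z, [/\ x \in X, y \in X, z \in X & [/\ x != y, x != z & y != z]].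
Proof.
move=> H.
have /set0Pn [x xX] : X != set0 by rewrite -card_gt0; lia.
have := cardsD1 x X; rewrite xX => E1.
have /set0Pn [y yX] : X :\ x != set0 by rewrite -card_gt0; lia.
have := cardsD1 y (X :\ x); rewrite yX => E2.
have /set0Pn [z zX] : X :\ x :\ y != set0 by rewrite -card_gt0; lia.
move: yX zX; rewrite !inE => /andP [yx yX] /andP [zy /andP [zx zX]].
exists x, y, z; split => //; split; by rewrite eq_sym.
Qed.

Lemma cardU3 (T : finType) (A1 A2 A3 : {set T}) :
  (#|A1| + #|A2| + #|A3| <= #|A1 :|: A2 :|: A3| + #|A1 :&: A2| + #|A1 :&: A3| + #|A2 :&: A3|)%N.
Proof.
have h1 := cardsUI A1 A2.
have h2 := cardsUI (A1 :|: A2) A3.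
have h3 := cardsUI (A1 :&: A3) (A2 :&: A3).
rewrite setIUl in h2. lia.
Qed.

Lemma link_eq (n t l : nat) (F : finFieldType) (toF : (cpar n t l).-tuple bool -> F) (emb : nat -> F) (honest : {set 'I_n}) (w : 'I_n -> l.-tuple bool) (adv1 : 'I_n -> 'I_n -> F * F) i j : j \in honest -> u1 toF emb honest w adv1 i j ->
  yval toF emb w i (lab j) = yval toF emb w j (lab j).
Proof.
move=> jH; rewrite /u1; case: eqVneq => [-> //| ne].
by rewrite /recv1 jH => /eqP [_ ->].
Qed.

Definition Aset (n t l : nat) (F : finFieldType) (toF : (cpar n t l).-tuple bool -> F) (emb : nat -> F) (honest : {set 'I_n}) (w : 'I_n -> l.-tuple bool) (adv1 : 'I_n -> 'I_n -> F * F) i := [set j in honest | u1 toF emb honest w adv1 i j].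

Lemma inter_small (n t l : nat) (F : finFieldType) (toF : (cpar n t l).-tuple bool -> F) (emb : nat -> F) (honest : {set 'I_n}) (w : 'I_n -> l.-tuple bool) (adv1 : 'I_n -> 'I_n -> F * F) i1 i2 :
  injective toF -> {in [pred x : nat | (0 < x <= n)%N] &, injective emb} ->
  (kpar t <= n)%N -> w i1 != w i2 -> (#|Aset toF emb honest w adv1 i1 :&: Aset toF emb honest w adv1 i2| <= t %/ 5)%N.
Proof.
move=> itoF iemb kn ne; rewrite leqNgt; apply/negP => big.
move/eqP: ne; apply; apply: (agree_eq (J := Aset toF emb honest w adv1 i1 :&: Aset toF emb honest w adv1 i2) itoF iemb kn) => //.
move=> j; rewrite !inE => /andP [/andP [jH u1j] /andP [_ u2j]].
have e1 := link_eq jH u1j; have e2 := link_eq jH u2j.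
rewrite /yval /lab in e1 e2; rewrite /yv e1 -e2 //.
Qed.

Lemma A_large (n t l : nat) (F : finFieldType) (toF : (cpar n t l).-tuple bool -> F) (emb : nat -> F) (honest : {set 'I_n}) (w : 'I_n -> l.-tuple bool) (adv1 : 'I_n -> 'I_n -> F * F) (adv2 : 'I_n -> 'I_n -> bool) i : s2 toF emb honest w adv1 adv2 i ->
  (n - t <= #|Aset toF emb honest w adv1 i| + #|~: honest|)%N.
Proof.
move=> /andP [s1i _]; apply: leq_trans s1i _.
apply: leq_trans (_ : #|Aset toF emb honest w adv1 i :|: ~: honest| <= _)%N; last first.
  have := cardsUI (Aset toF emb honest w adv1 i) (~: honest); lia.
apply: subset_leq_card; apply/subsetP => j; rewrite /Aset !inE => uj.
by case: (j \in honest); rewrite /= ?orbF.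
Qed.


End Aux.
Import Aux.
Unset Implicit Arguments.


Theorem lemma11 (n t l : nat) (F : finFieldType)
  (toF : (cpar n t l).-tuple bool -> F) (emb : nat -> F)
  (honest : {set 'I_n}) (w : 'I_n -> l.-tuple bool)
  (adv1 : 'I_n -> 'I_n -> F * F) (adv2 : 'I_n -> 'I_n -> bool) :
  (3 * t + 1 <= n)%N ->
  #|F| = (2 ^ cpar n t l)%N ->
  bijective toF ->
  {in [pred x : nat | (0 < x <= n)%N] &, injective emb} ->
  (forall x : nat, (0 < x <= n)%N -> emb x != 0%R) ->
  (#|~: honest| <= t)%N ->
  (eta2 toF emb honest w adv1 adv2 <= 2)%N.
Proof.
move=> hn _ btoF iemb _ hd.
have itoF : injective toF := bij_inj btoF.
have kn : (kpar t <= n)%N by rewrite /kpar; have := leq_div t 5; lia.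
rewrite leqNgt; apply/negP => H3.
have [x [y [z [xX yX zX [nxy nxz nyz]]]]] := three_elems H3.
move: xX => /imsetP [i1]; rewrite inE => /andP [h1 s1] E1.
move: yX => /imsetP [i2]; rewrite inE => /andP [h2 s2] E2.
move: zX => /imsetP [i3]; rewrite inE => /andP [h3 s3] E3.
subst x y z.
have a1 := A_large s1; have a2 := A_large s2; have a3 := A_large s3.
have p12 := inter_small (w:=w) honest adv1 itoF iemb kn nxy.
have p13 := inter_small (w:=w) honest adv1 itoF iemb kn nxz.
have p23 := inter_small (w:=w) honest adv1 itoF iemb kn nyz.
have U := cardU3 (Aset toF emb honest w adv1 i1) (Aset toF emb honest w adv1 i2)
  (Aset toF emb honest w adv1 i3).
have Uh : (#|Aset toF emb honest w adv1 i1 :|: Aset toF emb honest w adv1 i2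
   :|: Aset toF emb honest w adv1 i3| <= #|honest|)%N.
  by apply: subset_leq_card; apply/subsetP => j; rewrite /Aset !inE -!andb_orr => /andP [].
have hc := cardsC honest; rewrite card_ord in hc.
have q5 := leq_divM t 5.
lia.
Qed.
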